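(* Let $a,b,c,d\ge 0$ be integers with $a+b=c+d=n\ge 1$, and let $\underline x=(a,b)$ and $\underline y=(c,d)$. Then the meander permutation $\sigma_{\underline x,\underline y}$ sends each $i\in\{1,\ldots,n\}$ to the unique element of $\{1,\ldots,n\}$ congruent to $i+a-c$ modulo $n$.
   Context: For compositions $\underline x=(a_1,\ldots,a_m)$, $\underline y=(b_1,\ldots,b_t)$ of $n$ (sequences of nonnegative integers summing to $n$), define bijections $t,b$ of $\{1,\ldots,n\}$ as follows. For each part $a_k$ with $s=a_1+\cdots+a_{k-1}$, set $t(s+j)=s+a_k+1-j$ for $1\le j\le a_k$. Similarly, for each part $b_k$ of $\underline y$ with $s=b_1+\cdots+b_{k-1}$, set $b(s+j)=s+b_k+1-j$ for $1\le j\le b_k$. (These are the top and bottom bijections of the modified meander graph: each vertex is sent to the other endpoint of its top, resp. bottom, arc and fixed if it has none.) The meander permutation is $\sigma_{\underline x,\underline y}=t\circ b$. *)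

(* Defs.v *)
From mathcomp Require Import all_boot all_order all_algebra.
Set Implicit Arguments. Unset Strict Implicit. Unset Printing Implicit Defensive.

(* Block-reversal bijection of {1,...,n} attached to a composition
   s = (a_1,...,a_m) (a sequence of nonnegative integers).  Points not covered by any
   part (only possible outside {1,..,sum s}) are fixed. *)
Fixpoint block_rev_aux (off : nat) (s : seq nat) (i : nat) : nat :=
  match s with
  | [::] => i
  | a :: s' =>
      if (off < i) && (i <= off + a) then off + a + 1 - (i - off)
      else block_rev_aux (off + a) s' i
  end.

Definition block_rev (s : seq nat) (i : nat) : nat := block_rev_aux 0 s i.

(* top bijection t from x, bottom bijection b from y, sigma = t o b *)
Definition meander_perm (x y : seq nat) (i : nat) : nat :=
  block_rev x (block_rev y i).

(* Main.v *)
Require Import Defs.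
From mathcomp Require Import all_boot all_order all_algebra.
From mathcomp Require Import zify.
Import GRing.Theory Num.Theory.

Lemma modhelp (r i a c n : nat) (k : int) :
  (r%:Z = i%:Z + a%:Z - c%:Z + k * n%:Z)%R ->
  ((r%:Z = i%:Z + a%:Z - c%:Z %[mod n%:Z])%Z).
Proof. move=> ->; by rewrite addrC modzMDl. Qed.

Theorem lemma4p8 (a b c d n : nat) :
  a + b = n -> c + d = n -> 1 <= n ->
  forall i : nat, 1 <= i <= n ->
    (1 <= meander_perm [:: a; b] [:: c; d] i <= n) /\
    (((meander_perm [:: a; b] [:: c; d] i)%:Z
       = i%:Z + a%:Z - c%:Z %[mod n%:Z])%Z).
Proof.
move=> Hab Hcd Hn i /andP[Hi1 Hin].
rewrite /meander_perm /block_rev /= !add0n !subn0.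
have [j [Hj1 Hj2 Hj]] : exists j, [/\ 1 <= j <= n,
    (Posz j = (if (i <= c)%N then Posz c + 1 - Posz i else Posz n + 1 + Posz c - Posz i) :> int)%R &
    (if (0 < i <= c) then c + 1 - i
     else if c < i <= c + d then c + d + 1 - (i - c) else i) = j].
  case: (leqP i c) => H1.
  - exists (c + 1 - i); rewrite Hi1 /=; split; lia.
  - have H2 : i <= c + d by lia.
    rewrite andbF /= H2; exists (c + d + 1 - (i - c)); split; lia.
rewrite Hj; clear Hj.
have Hj0 : 0 < j by lia.
case: (leqP j a) => H3; rewrite ?Hj0 /=.
- split; first lia.
  apply: (@modhelp _ _ _ _ _ (if (i <= c)%N then 0%R else (-1)%R : int)).
  move: Hj2; case: (leqP i c) => ? ?; lia.
- have H4 : j <= a + b by lia.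
  rewrite ?andbF /= ?H4; split; first lia.
  apply: (@modhelp _ _ _ _ _ (if (i <= c)%N then 1%R else 0%R : int)).
  move: Hj2; case: (leqP i c) => ? ?; lia.
Qed.
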